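(* For every $N\times N$ stochastic matrix $A$ and every $t\geq 1$, one has $\frac{1}{N}\leq \tau_t(A)\leq 1$. Moreover, if $A$ is reducible, then $\tau_t(A)\leq 1-\frac{1}{N+1}$ for all $t\geq 1$.
   Context: Let $X$ be a square-integrable real random variable with $\mathbb E X=\theta$ and $\mathrm{Var}(X)=\sigma^2>0$. Fix an integer $N\geq 2$. For $i\in\{1,\dots,N\}$ and $t\geq 1$ let $X_t^{(i)}$ be random variables distributed as $X$, mutually independent over both $i$ and $t$, and write $\mathbf X_t=(X_t^{(1)},\dots,X_t^{(N)})^\top$. Let $A=(a_{ij})_{1\le i,j\le N}$ be a stochastic matrix ($a_{ij}\geq 0$ and every row sums to $1$). Define $\hat{\boldsymbol\theta}_1=\mathbf X_1$ and $\hat{\boldsymbol\theta}_{t+1}=\frac{t}{t+1}A\hat{\boldsymbol\theta}_t+\frac{1}{t+1}\mathbf X_{t+1}$ for $t\geq 1$. Let $\bar{\mathbb X}_{Nt}=\frac{1}{Nt}\sum_{i=1}^N\sum_{k=1}^t X_k^{(i)}$, $\mathbf 1=(1,\dots,1)^\top$, and let $\|\cdot\|$ denote the Euclidean norm. The performance ratio is $\tau_t(A)=\dfrac{\mathbb E\|(\bar{\mathbb X}_{Nt}-\theta)\mathbf 1\|^2}{\mathbb E\|\hat{\boldsymbol\theta}_t-\theta\mathbf 1\|^2}$, $t\geq 1$. A stochastic matrix $A$ is irreducible if for every pair $(i,j)$ there is an integer $k\geq 0$ with $(A^k)_{ij}\neq 0$, and reducible otherwise. *)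

(* Defs.v *)
From HB Require Import structures.
From mathcomp Require Import all_boot all_order all_algebra.
Set Implicit Arguments. Unset Strict Implicit. Unset Printing Implicit Defensive.
Import Order.TTheory GRing.Theory Num.Theory.
Local Open Scope ring_scope.

Definition stochastic (R : numDomainType) (N : nat) (A : 'M[R]_N) : Prop :=
  (forall i j, 0 <= A i j) /\ (forall i, \sum_j A i j = 1).

Definition irreducible (R : numDomainType) (N : nat) (A : 'M[R]_N) : Prop :=
  forall i j, exists k : nat, (A ^+ k) i j != 0.

(* Abstract second-order probability model on a sample space Om:
   L1 = integrable random variables, L2 = square-integrable ones,
   E = expectation (linear, normalized, positive on L1). *)
Record expectation_space (R : realFieldType) (Om : Type)
    (L1 L2 : (Om -> R) -> Prop) (E : (Om -> R) -> R) : Prop := {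
  L2_const : forall c : R, L2 (fun _ => c);
  L2_add : forall f g, L2 f -> L2 g -> L2 (fun w => f w + g w);
  L2_scale : forall (c : R) f, L2 f -> L2 (fun w => c * f w);
  L2_mul : forall f g, L2 f -> L2 g -> L1 (fun w => f w * g w);
  L1_add : forall f g, L1 f -> L1 g -> L1 (fun w => f w + g w);
  L1_scale : forall (c : R) f, L1 f -> L1 (fun w => c * f w);
  E_add : forall f g, L1 f -> L1 g -> E (fun w => f w + g w) = E f + E g;
  E_scale : forall (c : R) f, L1 f -> E (fun w => c * f w) = c * E f;
  E_const : forall c : R, E (fun _ => c) = c;
  E_pos : forall f, L1 f -> (forall w, 0 <= f w) -> 0 <= E f
}.

(* The samples X i t (i : 'I_N agent, t >= 1 time) are square integrable,
   with mean theta and variance sigma2, and pairwise independent (used only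
   through E[X Y] = E[X] E[Y] for distinct pairs of samples). *)
Definition sample_model (R : realFieldType) (Om : Type) (N : nat)
    (L1 L2 : (Om -> R) -> Prop) (E : (Om -> R) -> R)
    (X : 'I_N -> nat -> Om -> R) (theta sigma2 : R) : Prop :=
  [/\ forall i t, (0 < t)%N -> L2 (X i t),
      forall i t, (0 < t)%N -> E (X i t) = theta,
      forall i t, (0 < t)%N -> E (fun w => (X i t w - theta) ^+ 2) = sigma2
    & forall i t j s, (0 < t)%N -> (0 < s)%N -> (i, t) != (j, s) ->
        E (fun w => X i t w * X j s w) = E (X i t) * E (X j s)].

(* theta_hat t i w : component i of the estimator at time t (t >= 1).
   theta_hat 0 is an unused junk value 0; the recursion at t = 0 gives
   theta_hat 1 = X_1 exactly. *)
Fixpoint theta_hat (R : realFieldType) (Om : Type) (N : nat) (A : 'M[R]_N)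
    (X : 'I_N -> nat -> Om -> R) (t : nat) : 'I_N -> Om -> R :=
  match t with
  | 0 => fun _ _ => 0
  | t'.+1 => fun i w =>
      t'%:R / t'.+1%:R * (\sum_j A i j * theta_hat A X t' j w)
      + t'.+1%:R^-1 * X i t'.+1 w
  end.

Definition Xbar (R : realFieldType) (Om : Type) (N : nat)
    (X : 'I_N -> nat -> Om -> R) (t : nat) (w : Om) : R :=
  (N * t)%:R^-1 * \sum_(i < N) \sum_(1 <= k < t.+1) X i k w.

Definition tau (R : realFieldType) (Om : Type) (N : nat)
    (E : (Om -> R) -> R) (A : 'M[R]_N) (X : 'I_N -> nat -> Om -> R)
    (theta : R) (t : nat) : R :=
  E (fun w => \sum_(i < N) (Xbar X t w - theta) ^+ 2)
  / E (fun w => \sum_(i < N) (theta_hat A X t i w - theta) ^+ 2).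

(* Main.v *)
Require Import Defs.
From HB Require Import structures.
From mathcomp Require Import all_boot all_order all_algebra.
From mathcomp Require Import zify ring lra.
From Stdlib Require Import FunctionalExtensionality Classical ClassicalEpsilon.
Import Order.TTheory GRing.Theory Num.Theory.
Local Open Scope ring_scope.

Lemma feq (R : Type) (Om : Type) (P : (Om -> R) -> Prop) (f g : Om -> R) :
  (forall w, f w = g w) -> P f -> P g.
Proof. by move=> H; rewrite (functional_extensionality f g H). Qed.

Lemma Eeq (R : Type) (Om : Type) (E : (Om -> R) -> R) (f g : Om -> R) :
  (forall w, f w = g w) -> E f = E g.
Proof. by move=> H; rewrite (functional_extensionality f g H). Qed.

Arguments feq {R Om P} f {g}.
Arguments Eeq {R Om E f} g.

Lemma L1_0 (R : realFieldType) Om L1 L2 (E : (Om -> R) -> R) :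
  expectation_space L1 L2 E -> L1 (fun _ => 0).
Proof.
move=> HE; apply: (feq (fun w => 0 * 0)) => [w|]; first by rewrite mulr0.
exact: (L2_mul HE (L2_const HE 0) (L2_const HE 0)).
Qed.

Lemma L1_of_L2 (R : realFieldType) Om L1 L2 (E : (Om -> R) -> R) f :
  expectation_space L1 L2 E -> L2 f -> L1 f.
Proof.
move=> HE Hf; apply: (feq (fun w => f w * 1)) => [w|]; first by rewrite mulr1.
exact: (L2_mul HE Hf (L2_const HE 1)).
Qed.

Arguments L1_0 {R Om L1 L2 E}.
Arguments L1_of_L2 {R Om L1 L2 E f}.
Lemma L1_sum (R : realFieldType) Om L1 L2 (E : (Om -> R) -> R) (I : Type)
  (r : seq I) (P : pred I) (f : I -> Om -> R) :
  expectation_space L1 L2 E -> (forall i, P i -> L1 (f i)) ->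
  L1 (fun w => \sum_(i <- r | P i) f i w).
Proof.
move=> HE Hf; elim: r => [|a r IH].
  by apply: (feq (fun _ => 0)) => [w|]; [rewrite big_nil | exact: L1_0 HE].
case Pa: (P a).
  apply: (feq (fun w => f a w + \sum_(i <- r | P i) f i w)) => [w|].
    by rewrite big_cons Pa.
  exact (L1_add HE (Hf a Pa) IH).
by apply: feq IH => w; rewrite big_cons Pa.
Qed.

Arguments L1_sum {R Om L1 L2 E I r P f}.
Lemma L2_sum (R : realFieldType) Om L1 L2 (E : (Om -> R) -> R) (I : Type)
  (r : seq I) (P : pred I) (f : I -> Om -> R) :
  expectation_space L1 L2 E -> (forall i, P i -> L2 (f i)) ->
  L2 (fun w => \sum_(i <- r | P i) f i w).
Proof.
move=> HE Hf; elim: r => [|a r IH].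
  by apply: (feq (fun _ => 0)) => [w|]; [rewrite big_nil | exact: L2_const HE 0].
case Pa: (P a).
  apply: (feq (fun w => f a w + \sum_(i <- r | P i) f i w)) => [w|].
    by rewrite big_cons Pa.
  exact (L2_add HE (Hf a Pa) IH).
by apply: feq IH => w; rewrite big_cons Pa.
Qed.

Arguments L2_sum {R Om L1 L2 E I r P f}.
Lemma E_sum (R : realFieldType) Om L1 L2 (E : (Om -> R) -> R) (I : Type)
  (r : seq I) (P : pred I) (f : I -> Om -> R) :
  expectation_space L1 L2 E -> (forall i, P i -> L1 (f i)) ->
  E (fun w => \sum_(i <- r | P i) f i w) = \sum_(i <- r | P i) E (f i).
Proof.
move=> HE Hf; elim: r => [|a r IH].
  by rewrite big_nil (Eeq (fun _ => 0)) ?(E_const HE) // => w; rewrite big_nil.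
case Pa: (P a); rewrite big_cons Pa.
  rewrite (Eeq (fun w => f a w + \sum_(i <- r | P i) f i w)); last first.
    by move=> w; rewrite big_cons Pa.
  by rewrite (E_add HE (Hf a Pa) (L1_sum HE Hf)) IH.
by rewrite -IH; apply: Eeq => w; rewrite big_cons Pa.
Qed.

Arguments E_sum {R Om L1 L2 E I r P f}.
Lemma E_var (R : realFieldType) Om L1 L2 (E : (Om -> R) -> R) (I : finType)
  (e : I -> Om -> R) (s2 : R) (c : I -> R) :
  expectation_space L1 L2 E -> (forall a, L2 (e a)) ->
  (forall a b, E (fun w => e a w * e b w) = if a == b then s2 else 0) ->
  E (fun w => (\sum_a c a * e a w) ^+ 2) = s2 * \sum_a c a ^+ 2.
Proof.
move=> HE He Hab.
have L1ab : forall a b, L1 (fun w => c a * c b * (e a w * e b w)).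
  by move=> a b; exact (L1_scale HE _ (L2_mul HE (He a) (He b))).
rewrite (Eeq (fun w => \sum_a \sum_b c a * c b * (e a w * e b w))); last first.
  move=> w; rewrite expr2 mulr_suml; apply: eq_bigr => a _; rewrite mulr_sumr.
  by apply: eq_bigr => b _; ring.
rewrite (E_sum HE); last by move=> a _; exact (L1_sum HE (fun b _ => L1ab a b)).
rewrite mulr_sumr; apply: eq_bigr => a _.
rewrite (E_sum HE); last by move=> b _; exact: L1ab.
rewrite (bigD1 a) //= big1 ?addr0.
  by rewrite (E_scale HE _ (L2_mul HE (He a) (He a))) Hab eqxx; ring.
by move=> b /negPf nb; rewrite (E_scale HE _ (L2_mul HE (He a) (He b))) Hab eq_sym nb mulr0.
Qed.
Lemma E_cov (R : realFieldType) (Om : Type) (N : nat) L1 L2 (E : (Om -> R) -> R)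
    (X : 'I_N -> nat -> Om -> R) (theta sigma2 : R) (t : nat) :
  expectation_space L1 L2 E -> sample_model L1 L2 E X theta sigma2 ->
  forall p q : 'I_N * 'I_t,
  E (fun w => (X p.1 (p.2).+1 w - theta) * (X q.1 (q.2).+1 w - theta))
  = if p == q then sigma2 else 0.
Proof.
move=> HE [HL2 HEX HV Hind] p q.
case: eqP => [<-|npq].
  rewrite -(HV p.1 (p.2).+1) //; apply: Eeq => w; by rewrite expr2.
have L2a := HL2 p.1 (p.2).+1 isT.
have L2b := HL2 q.1 (q.2).+1 isT.
have L1a := L1_of_L2 HE L2a.
have L1b := L1_of_L2 HE L2b.
have L1ab := L2_mul HE L2a L2b.
have L1c := L1_of_L2 HE (L2_const HE (theta * theta)).
have H1 := L1_scale HE (- theta) L1a.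
have H2 := L1_scale HE (- theta) L1b.
rewrite (Eeq (fun w => X p.1 (p.2).+1 w * X q.1 (q.2).+1 w +
   ((- theta) * X p.1 (p.2).+1 w + ((- theta) * X q.1 (q.2).+1 w + theta * theta)))); last first.
  by move=> w; ring.
rewrite (E_add HE L1ab (L1_add HE H1 (L1_add HE H2 L1c))).
rewrite (E_add HE H1 (L1_add HE H2 L1c)) (E_add HE H2 L1c).
rewrite (E_scale HE _ L1a) (E_scale HE _ L1b) (E_const HE).
rewrite Hind // ?HEX //; first by ring.
apply/eqP => -[e1 e2]; apply: npq.
by rewrite [p]surjective_pairing [q]surjective_pairing e1 (val_inj e2).
Qed.

Lemma mulE (R : realFieldType) N (A B : 'M[R]_N) i j :
  (A * B) i j = \sum_k A i k * B k j.
Proof. by rewrite -mulmxE mxE. Qed.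

Lemma oneE (R : realFieldType) N (i j : 'I_N) : (1 : 'M[R]_N) i j = (i == j)%:R.
Proof. by rewrite mxE. Qed.

Lemma stoch_pow (R : realFieldType) N (A : 'M[R]_N) :
  stochastic A -> forall k, stochastic (A ^+ k).
Proof.
move=> [A0 A1]; elim=> [|k [IH0 IH1]].
  split=> [i j|i]; first by rewrite expr0 oneE ler0n.
  rewrite expr0 (bigD1 i) //= big1 ?oneE ?eqxx ?addr0 // => j nj.
  by rewrite oneE eq_sym (negPf nj).
split=> [i j|i].
  by rewrite exprS mulE; apply: sumr_ge0 => l _; apply: mulr_ge0.
rewrite exprS (eq_bigr (fun j => \sum_l A i l * (A ^+ k) l j)); last by move=> j _; rewrite mulE.
rewrite exchange_big /= -(A1 i); apply: eq_bigr => l _.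
by rewrite -mulr_sumr IH1 mulr1.
Qed.

Arguments stoch_pow {R N A}.
Lemma row_lb (R : realFieldType) N (S : {set 'I_N}) (v : 'I_N -> R) :
  (0 < #|S|)%N -> \sum_(j in S) v j = 1 -> #|S|%:R^-1 <= \sum_(j in S) v j ^+ 2.
Proof.
move=> S0 Sv; set s : R := #|S|%:R.
have s0 : s != 0 by rewrite pnatr_eq0 -lt0n.
have H : 0 <= \sum_(j in S) (v j - s^-1) ^+ 2 by apply: sumr_ge0 => j _; apply: sqr_ge0.
have E1 : \sum_(j in S) (v j - s^-1) ^+ 2
    = \sum_(j in S) v j ^+ 2 - 2 * s^-1 * \sum_(j in S) v j + s^-1 ^+ 2 *+ #|S|.
  rewrite -sumr_const mulr_sumr -sumrB -big_split /=; apply: eq_bigr => j _; ring.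
have E2 : s^-1 ^+ 2 *+ #|S| = s^-1 by rewrite -mulr_natr -/s expr2 -mulrA mulVf // mulr1.
rewrite E1 Sv E2 in H; lra.
Qed.

Lemma row_ub (R : realFieldType) N (v : 'I_N -> R) :
  (forall j, 0 <= v j) -> \sum_j v j = 1 -> \sum_j v j ^+ 2 <= 1.
Proof.
move=> v0 v1; rewrite -{1}v1; apply: ler_sum => j _.
have vj1 : v j <= 1.
  rewrite -v1 (bigD1 j) //= lerDl; exact: sumr_ge0.
by rewrite expr2 -{3}(mulr1 (v j)); apply: ler_wpM2l (v0 j) _ _ vj1.
Qed.

Definition Fn (R : realFieldType) N (M : 'M[R]_N) : R := \sum_i \sum_j M i j ^+ 2.
Arguments Fn {R N}.

Lemma Fn_bounds (R : realFieldType) N (M : 'M[R]_N) : (0 < N)%N ->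
  stochastic M -> 1 <= Fn M /\ Fn M <= N%:R.
Proof.
move=> N0 [M0 M1]; split.
  have -> : (1 : R) = \sum_(i < N) N%:R^-1.
    by rewrite sumr_const card_ord -[_ *+ N]mulr_natr mulVf // pnatr_eq0 -lt0n.
  apply: ler_sum => i _.
  have := @row_lb R N [set: 'I_N] (M i); rewrite cardsT card_ord.
  rewrite (eq_bigl xpredT) ?M1; last by move=> j; rewrite in_setT.
  rewrite (eq_bigl xpredT); last by move=> j; rewrite in_setT.
  by apply.
rewrite /Fn -[N in N%:R]card_ord -sumr_const; apply: ler_sum => i _.
exact: row_ub.
Qed.

Lemma rowT_lb (R : realFieldType) N (M : 'M[R]_N) i : (0 < N)%N ->
  stochastic M -> N%:R^-1 <= \sum_j M i j ^+ 2.
Proof.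
move=> N0 [M0 M1].
have := @row_lb R N [set: 'I_N] (M i); rewrite cardsT card_ord.
rewrite (eq_bigl xpredT) ?M1; last by move=> j; rewrite in_setT.
rewrite (eq_bigl xpredT); last by move=> j; rewrite in_setT.
by apply.
Qed.

Arguments rowT_lb {R N M} i.
Arguments row_lb {R N S v}.
Definition asb (P : Prop) : bool := if excluded_middle_informative P then true else false.
Lemma asbP (P : Prop) : asb P = true <-> P.
Proof. by rewrite /asb; case: excluded_middle_informative. Qed.

Lemma Fn_red (R : realFieldType) N (A : 'M[R]_N) : (0 < N)%N ->
  stochastic A -> ~ irreducible A -> forall m, 1 + N%:R^-1 <= Fn (A ^+ m).
Proof.
move=> N0 HA Hirr m.
have [i0 [j0 Hj]] : exists i j, forall k, (A ^+ k) i j = 0.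
  apply: NNPP => H; apply: Hirr => i j; apply: NNPP => H2; apply: H.
  exists i, j => k; apply/eqP; apply: NNPP => H3; apply: H2; exists k; exact/negP.
pose S := [set l | asb (exists k, (A ^+ k) i0 l != 0)].
have inS l : (l \in S) <-> exists k, (A ^+ k) i0 l != 0.
  by rewrite inE; apply: asbP.
have P0 k i j : 0 <= (A ^+ k) i j by case: (stoch_pow HA k) => H _; exact: H.
have clos l l' : l \in S -> (A ^+ m) l l' != 0 -> l' \in S.
  move=> /inS [k Hk] Hm; apply/inS; exists (k + m)%N.
  rewrite exprD mulE (bigD1 l) //=; apply: lt0r_neq0; apply: ltr_wpDr.
    by apply: sumr_ge0 => r _; apply: mulr_ge0.
  by apply: mulr_gt0; rewrite lt0r ?Hk ?Hm /= P0.
have zero l j : l \in S -> j \notin S -> (A ^+ m) l j = 0.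
  by move=> lS jS; apply/eqP; apply: contraNT jS => /(clos _ _ lS).
have i0S : i0 \in S by apply/inS; exists 0%N; rewrite expr0 oneE eqxx oner_eq0.
have j0S : j0 \notin S by apply/negP => /inS [k]; rewrite Hj eqxx.
have s0 : (0 < #|S|)%N by apply/card_gt0P; exists i0.
have c0 : (0 < #|~: S|)%N by apply/card_gt0P; exists j0; rewrite inE.
have sc : (#|S| + #|~: S|)%N = N by rewrite cardsC card_ord.
have [M0 M1] := stoch_pow HA m.
have rowS l : l \in S -> #|S|%:R^-1 <= \sum_j (A ^+ m) l j ^+ 2.
  move=> lS; apply: le_trans (row_lb s0 _) _.
    rewrite -(M1 l) [RHS](bigID (mem S)) /= [X in _ = _ + X]big1 ?addr0 //.
    by move=> j /zero ->.
  rewrite [X in _ <= X](bigID (mem S)) /= lerDl; apply: sumr_ge0 => j _; exact: sqr_ge0.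
rewrite /Fn (bigID (mem S)) /=.
have sR : (#|S|%:R : R) != 0 by rewrite pnatr_eq0 -lt0n.
have e1 : (#|S|%:R^-1 : R) *+ #|S| = 1.
  by rewrite -(mulr_natr (#|S|%:R^-1 : R) #|S|) mulVf.
have e2 : (N%:R^-1 : R) <= N%:R^-1 *+ #|~: S|.
  rewrite -(mulr_natr (N%:R^-1 : R)) ler_peMr ?invr_ge0 ?ler0n // ler1n //.
apply: le_trans (_ : _ <= #|S|%:R^-1 *+ #|S| + N%:R^-1 *+ #|~: S|) _.
  by rewrite e1 lerD2l.
rewrite -(sumr_const (mem S) (#|S|%:R^-1 : R)) -(sumr_const (mem (~: S)) (N%:R^-1 : R)); apply: lerD.
  rewrite (eq_bigl (mem S)) //. apply: ler_sum => l; exact: rowS.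
rewrite [X in _ <= X](eq_bigl (mem (~: S))); last by move=> l; rewrite /= !inE.
apply: ler_sum => l _. exact: (rowT_lb l N0 (stoch_pow HA m)).
Qed.

Lemma th_formula (R : realFieldType) (Om : Type) (N : nat) (A : 'M[R]_N)
    (X : 'I_N -> nat -> Om -> R) (theta : R) :
  stochastic A -> forall t i w,
  t%:R * (theta_hat A X t i w - theta)
  = \sum_j \sum_(k < t) (A ^+ (t.-1 - k)) i j * (X j k.+1 w - theta).
Proof.
move=> [A0 A1]; elim=> [|t IH] i w.
  by rewrite mul0r big1 // => j _; rewrite big_ord0.
have Ht : (t.+1%:R : R) != 0 by rewrite pnatr_eq0.
pose y j := \sum_l \sum_(k < t) (A ^+ (t.-1 - k)) j l * (X l k.+1 w - theta).
have HS : t%:R * (\sum_j A i j * theta_hat A X t j w)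
          = \sum_j A i j * y j + t%:R * theta.
  have -> : \sum_j A i j * y j = \sum_j (t%:R * (A i j * theta_hat A X t j w) - t%:R * theta * A i j).
    by apply: eq_bigr => j _; rewrite /y -IH; ring.
  by rewrite sumrB -!mulr_sumr A1; ring.
have Hr : \sum_j \sum_(k < t.+1) (A ^+ (t.+1.-1 - k)) i j * (X j k.+1 w - theta)
          = \sum_j A i j * y j + (X i t.+1 w - theta).
  rewrite /=.
  have -> : \sum_j \sum_(k < t.+1) (A ^+ (t - k)) i j * (X j k.+1 w - theta)
     = \sum_j \sum_(k < t) (A ^+ (t - k)) i j * (X j k.+1 w - theta)
       + \sum_j (A ^+ 0) i j * (X j t.+1 w - theta).
    rewrite -big_split /=; apply: eq_bigr => j _; by rewrite big_ord_recr /= subnn.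
  congr (_ + _); last first.
    rewrite (bigD1 i) //= big1 ?addr0; first by rewrite expr0 oneE eqxx mul1r.
    by move=> j nj; rewrite expr0 oneE eq_sym (negPf nj) mul0r.
  rewrite /y.
  have -> : \sum_j \sum_(k < t) (A ^+ (t - k)) i j * (X j k.+1 w - theta)
     = \sum_l \sum_(k < t) \sum_j A i j * ((A ^+ (t.-1 - k)) j l * (X l k.+1 w - theta)).
    apply: eq_bigr => l _; apply: eq_bigr => k _.
    have -> : (t - k = (t.-1 - k).+1)%N by have := ltn_ord k; lia.
    by rewrite exprS mulE mulr_suml; apply: eq_bigr => j _; rewrite mulrA.
  rewrite exchange_big /=.
  under eq_bigr do rewrite exchange_big /=.
  rewrite exchange_big /=; apply: eq_bigr => j _.
  by rewrite exchange_big /= mulr_sumr; apply: eq_bigr => l _; rewrite mulr_sumr.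
rewrite Hr /=.
have -> : t.+1%:R * (t%:R / t.+1%:R * (\sum_j A i j * theta_hat A X t j w) +
     t.+1%:R^-1 * X i t.+1 w - theta)
     = t%:R * (\sum_j A i j * theta_hat A X t j w) + X i t.+1 w - t.+1%:R * theta.
  by field; rewrite addrC natr1.
move: HS; rewrite -addn1 natrD => HS; lra.
Qed.

Arguments Fn_bounds {R N M}.
Arguments Fn_red {R N A}.

Arguments E_cov {R Om N L1 L2 E X theta sigma2} t.
Arguments E_var {R Om L1 L2 E I e s2} c.
Arguments th_formula {R Om N A X theta}.

Lemma tau_eq (R : realFieldType) (N : nat) (HN : (0 < N)%N)
    (Om : Type) (L1 L2 : (Om -> R) -> Prop) (E : (Om -> R) -> R)
    (HE : expectation_space L1 L2 E)
    (X : 'I_N -> nat -> Om -> R) (theta sigma2 : R) (Hsigma : 0 < sigma2)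
    (HX : sample_model L1 L2 E X theta sigma2)
    (A : 'M[R]_N) (HA : stochastic A) (t : nat) (Ht : (0 < t)%N) :
  tau E A X theta t = t%:R / \sum_(k < t) Fn (A ^+ (t.-1 - k)).
Proof.
have [HL2 HEX HV Hind] := HX.
pose e := fun (p : 'I_N * 'I_t) w => X p.1 (p.2).+1 w - theta.
have He : forall p, L2 (e p).
  move=> p; apply: (feq (fun w => X p.1 (p.2).+1 w + (- theta))) => [w //|].
  exact (L2_add HE (HL2 p.1 (p.2).+1 isT) (L2_const HE (- theta))).
have Hab := E_cov t HE HX.
have tR : (t%:R : R) != 0 by rewrite pnatr_eq0 -lt0n.
have NR : (N%:R : R) != 0 by rewrite pnatr_eq0 -lt0n.
have L2c : forall c : 'I_N * 'I_t -> R, L2 (fun w => \sum_p c p * e p w).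
  move=> c; apply: (L2_sum HE) => p _; exact (L2_scale HE (c p) (He p)).
have L1sq : forall c : 'I_N * 'I_t -> R, L1 (fun w => (\sum_p c p * e p w) ^+ 2).
  move=> c; apply: (feq (fun w => (\sum_p c p * e p w) * (\sum_p c p * e p w))).
    by move=> w; rewrite expr2.
  exact (L2_mul HE (L2c c) (L2c c)).
pose c0 : R := (N * t)%:R^-1.
have Hnum : E (fun w => \sum_(i < N) (Xbar X t w - theta) ^+ 2) = sigma2 / t%:R.
  rewrite (Eeq (fun w => N%:R * (\sum_p (fun _ => c0) p * e p w) ^+ 2)); last first.
    move=> w; rewrite sumr_const card_ord mulr_natl; congr (_ ^+ 2 *+ N).
    rewrite /Xbar -/c0 -mulr_sumr -(pair_big xpredT xpredT (fun i k => e (i, k) w)) /=.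
    have -> : \sum_(i < N) \sum_(1 <= k < t.+1) X i k w = \sum_(i < N) \sum_(k < t) X i k.+1 w.
      by apply: eq_bigr => i _; rewrite big_add1 /= big_mkord.
    have -> : \sum_(i < N) \sum_(j < t) e (i, j) w
        = \sum_(i < N) \sum_(k < t) X i k.+1 w - theta *+ (N * t).
      rewrite /e /=.
      under eq_bigr do rewrite sumrB sumr_const card_ord.
      by rewrite sumrB sumr_const card_ord -mulrnA mulnC.
    rewrite mulrBr; congr (_ - _).
    have NtR : ((N * t)%:R : R) != 0 by rewrite natrM mulf_neq0.
    by rewrite -(mulr_natl theta (N * t)) mulrA /c0 mulVf // mul1r.
  rewrite (E_scale HE _ (L1sq _)) (E_var _ HE He Hab).
  rewrite sumr_const card_prod !card_ord -(mulr_natr (c0 ^+ 2) (N * t)) /c0 natrM.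
  by field; rewrite tR NR.
pose D := \sum_(k < t) Fn (A ^+ (t.-1 - k)).
have Dt : t%:R <= D.
  rewrite /D -[in X in X <= _](card_ord t) -sumr_const; apply: ler_sum => k _.
  by case: (Fn_bounds HN (stoch_pow HA (t.-1 - k))).
have D0 : D != 0 by apply: lt0r_neq0; apply: lt_le_trans Dt; rewrite ltr0n.
pose c := fun (i : 'I_N) (p : 'I_N * 'I_t) => t%:R^-1 * (A ^+ (t.-1 - p.2)) i p.1.
have Hden : E (fun w => \sum_(i < N) (theta_hat A X t i w - theta) ^+ 2)
            = sigma2 * (t%:R^-1 ^+ 2 * D).
  rewrite (Eeq (fun w => \sum_(i < N) (\sum_p c i p * e p w) ^+ 2)); last first.
    move=> w; apply: eq_bigr => i _; congr (_ ^+ 2).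
    rewrite -(mulKf tR (theta_hat A X t i w - theta)) (th_formula HA).
    rewrite -(pair_big xpredT xpredT (fun j k => c i (j, k) * e (j, k) w)) /= mulr_sumr.
    apply: eq_bigr => j _; rewrite mulr_sumr; apply: eq_bigr => k _.
    by rewrite /c /e /= mulrA.
  rewrite (E_sum HE); last by move=> i _; exact: L1sq.
  under eq_bigr do rewrite (E_var _ HE He Hab).
  rewrite -mulr_sumr; congr (_ * _).
  rewrite /D /Fn mulr_sumr.
  have -> : \sum_(i < N) \sum_p c i p ^+ 2
      = \sum_(i < N) \sum_(j < N) \sum_(k < t) t%:R^-1 ^+ 2 * (A ^+ (t.-1 - k)) i j ^+ 2.
    apply: eq_bigr => i _.
    rewrite -(pair_big xpredT xpredT (fun j k => c i (j, k) ^+ 2)) /=.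
    apply: eq_bigr => j _; apply: eq_bigr => k _; by rewrite /c exprMn.
  rewrite [RHS](eq_bigr (fun k : 'I_t => \sum_(i < N) \sum_(j < N) t%:R^-1 ^+ 2 * (A ^+ (t.-1 - k)) i j ^+ 2)); last first.
    by move=> k _; rewrite mulr_sumr; apply: eq_bigr => i _; rewrite mulr_sumr.
  rewrite [RHS]exchange_big /=; apply: eq_bigr => i _; by rewrite [RHS]exchange_big.
rewrite /tau Hnum Hden -/D.
by field; rewrite D0 tR gt_eqF.
Qed.

Theorem proposition1 (R : realFieldType) (N : nat) (HN : (2 <= N)%N)
    (Om : Type) (L1 L2 : (Om -> R) -> Prop) (E : (Om -> R) -> R)
    (HE : expectation_space L1 L2 E)
    (X : 'I_N -> nat -> Om -> R) (theta sigma2 : R) (Hsigma : 0 < sigma2)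
    (HX : sample_model L1 L2 E X theta sigma2)
    (A : 'M[R]_N) (HA : stochastic A) :
  (forall t : nat, (1 <= t)%N ->
     N%:R^-1 <= tau E A X theta t /\ tau E A X theta t <= 1) /\
  (~ irreducible A ->
     forall t : nat, (1 <= t)%N -> tau E A X theta t <= 1 - (N.+1)%:R^-1).
Proof.
have N0 : (0 < N)%N by apply: leq_trans HN.
have NR : (0 : R) < N%:R by rewrite ltr0n.
have key t : (1 <= t)%N -> tau E A X theta t = t%:R / \sum_(k < t) Fn (A ^+ (t.-1 - k)).
  by move=> Ht; exact: (@tau_eq R N N0 Om L1 L2 E HE X theta sigma2 Hsigma HX A HA t Ht).
have Dlo t : t%:R <= \sum_(k < t) Fn (A ^+ (t.-1 - k)) :> R.
  rewrite -[in X in X <= _](card_ord t) -sumr_const; apply: ler_sum => k _.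
  by case: (Fn_bounds N0 (stoch_pow HA (t.-1 - k))).
have Dhi t : \sum_(k < t) Fn (A ^+ (t.-1 - k)) <= N%:R * t%:R :> R.
  rewrite -[in X in _ <= _ * X](card_ord t) -sumr_const mulr_sumr; apply: ler_sum => k _.
  by rewrite mulr1; case: (Fn_bounds N0 (stoch_pow HA (t.-1 - k))).
split.
  move=> t Ht; rewrite key //.
  have tp : (0 : R) < t%:R by rewrite ltr0n.
  have Dp : 0 < \sum_(k < t) Fn (A ^+ (t.-1 - k)) :> R := lt_le_trans tp (Dlo t).
  split.
    rewrite ler_pdivlMr //.
    have Ni : (0 : R) <= N%:R^-1 by rewrite invr_ge0 ler0n.
    apply: le_trans (ler_wpM2l Ni (Dhi t)) _.
    by rewrite mulKf // gt_eqF.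
  by rewrite ler_pdivrMr // mul1r.
move=> Hirr t Ht; rewrite key //.
have tp : (0 : R) < t%:R by rewrite ltr0n.
have Dred : (1 + N%:R^-1) * t%:R <= \sum_(k < t) Fn (A ^+ (t.-1 - k)) :> R.
  rewrite -[in X in _ * X <= _](card_ord t) -sumr_const mulr_sumr; apply: ler_sum => k _.
  by rewrite mulr1; apply: (Fn_red N0 HA Hirr).
have Dp : 0 < \sum_(k < t) Fn (A ^+ (t.-1 - k)) :> R := lt_le_trans tp (Dlo t).
rewrite ler_pdivrMr //.
have N1 : (0 : R) < N.+1%:R by rewrite ltr0n.
have h0 : (0 : R) <= 1 - N.+1%:R^-1 by rewrite subr_ge0 invf_le1 // ler1n.
apply: le_trans (ler_wpM2l h0 Dred).
have -> : (1 - N.+1%:R^-1) * ((1 + N%:R^-1) * t%:R) = t%:R :> R.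
  by rewrite -natr1; field; rewrite natr1 !pnatr_eq0 -lt0n N0.
done.
Qed.
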